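(* Let $G=(V,E)$ be an infinite, connected, locally finite, vertex-transitive graph, $o\in V$, $\Gamma\subset\operatorname{Aut}(G)$ a group acting transitively on $V$, and $\mathbb{P}$ a $\Gamma$-invariant and ergodic probability measure on $\mathbb{R}^V$ with $\mathbb{E}|s(o)|<\infty$. If $s$ has law $\mathbb{P}$ and $\mathbb{P}\{s\text{ stabilizes}\}=1$, then the odometer $u_\infty$ of $s$ has $\Gamma$-invariant law. Moreover, if $\mathbb{E}\,s(o)=1$, then almost surely $s_\infty\equiv 1$ and $\Delta u_\infty=1-s$.
   Context: $\Delta u(x)=\sum_{y\sim x}(u(y)-u(x))$. For $s:V\to\mathbb{R}$, $\mathcal{F}_s=\{f\ge0: s+\Delta f\le1\}$; $s$ stabilizes if $\mathcal{F}_s\ne\emptyset$; its odometer is $u_\infty(x)=\inf\{f(x):f\in\mathcal{F}_s\}$ and its stabilization is $s_\infty=s+\Delta u_\infty$. A random function has $\Gamma$-invariant law if its law is preserved by $(T_\alpha f)(x)=f(\alpha^{-1}x)$ for all $\alpha\in\Gamma$. *)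

(* Defs.v *)
From HB Require Import structures.
From mathcomp Require Import all_boot all_order all_algebra.
From mathcomp Require Import all_classical all_reals all_analysis.
From Stdlib Require Import Relations.
Set Implicit Arguments. Unset Strict Implicit. Unset Printing Implicit Defensive.
Import Order.TTheory GRing.Theory Num.Theory.
Local Open Scope classical_set_scope.
Local Open Scope ring_scope.

(* A locally finite graph on a vertex type V is given by its (finite)
   neighbour lists: y ~ x  iff  y \in nbrs x. *)
Section Graph.
Variables (V : choiceType) (nbrs : V -> seq V).

Definition adj (x y : V) : Prop := y \in nbrs x.

Definition simple_graph : Prop :=
  (forall x, uniq (nbrs x)) /\ (forall x, x \notin nbrs x) /\
  (forall x y, adj x y -> adj y x).

Definition connected_graph : Prop := forall x y, clos_refl_trans V adj x y.

Definition infinite_graph : Prop := infinite_set [set: V].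

Definition graph_automorphism (a : V -> V) : Prop :=
  bijective a /\ forall x y, adj x y <-> adj (a x) (a y).

Definition aut_subgroup (Gam : set (V -> V)) : Prop :=
  (forall a, Gam a -> graph_automorphism a) /\ Gam id /\
  (forall a b, Gam a -> Gam b -> Gam (a \o b)) /\
  (forall a, Gam a -> exists b, Gam b /\ cancel a b /\ cancel b a).

Definition transitive_action (Gam : set (V -> V)) : Prop :=
  forall x y, exists a, Gam a /\ a x = y.

Definition vertex_transitive : Prop :=
  forall x y, exists a, graph_automorphism a /\ a x = y.

Variable R : realType.

Definition lap (u : V -> R) (x : V) : R := \sum_(y <- nbrs x) (u y - u x).

Definition stab_set (s : V -> R) : set (V -> R) :=
  [set f | (forall x, 0 <= f x) /\ (forall x, s x + lap f x <= 1)].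

Definition stabilizes (s : V -> R) : Prop := stab_set s !=set0.

Definition odometer (s : V -> R) : V -> R :=
  fun x => inf [set f x | f in stab_set s].

Definition stabilization (s : V -> R) : V -> R :=
  fun x => s x + lap (odometer s) x.

Definition coord_sets : set (set (V -> R)) :=
  [set A | exists x (B : set R), measurable B /\ A = [set f | B (f x)]].

Definition prod_measurable (A : set (V -> R)) : Prop := <<s coord_sets>> A.

(* translation action (T_a f)(x) = f (a^{-1} x), with b = a^{-1} *)
Definition shift (b : V -> V) (f : V -> R) : V -> R := f \o b.

Section Random.
Variables (d : measure_display) (Omega : measurableType d)
  (P : probability Omega R).

Definition random_field (X : Omega -> V -> R) : Prop :=
  forall x, measurable_fun setT (fun w => X w x).

Definition invariant_law (Gam : set (V -> V)) (X : Omega -> V -> R) : Prop :=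
  forall a b, Gam a -> cancel a b -> cancel b a ->
  forall A, prod_measurable A ->
    P (X @^-1` A) = P ((fun w => shift b (X w)) @^-1` A).

Definition ergodic_law (Gam : set (V -> V)) (X : Omega -> V -> R) : Prop :=
  forall A, prod_measurable A ->
  (forall a b, Gam a -> cancel a b -> cancel b a ->
     [set f | A (shift b f)] = A) ->
  P (X @^-1` A) = 0%E \/ P (X @^-1` A) = 1%E.
End Random.
End Graph.

(* Main.v *)
Require Import Defs.
From HB Require Import structures.
From mathcomp Require Import all_boot all_order all_algebra.
From mathcomp Require Import all_classical all_reals all_analysis.
From Stdlib Require Import Relations.
From mathcomp Require Import lra measurable_realfun.
Import Order.TTheory GRing.Theory Num.Theory.
Import numFieldNormedType.Exports.
Local Open Scope classical_set_scope.
Local Open Scope ring_scope.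
Set Implicit Arguments. Unset Strict Implicit. Unset Printing Implicit Defensive.


Section Det.
Variables (V : choiceType) (nbrs : V -> seq V) (R : realType).

Definition deg (z : V) : R := (size (nbrs z))%:R.
Definition Top (s u : V -> R) (z : V) : R :=
  Num.max 0 ((s z - 1 + \sum_(y <- nbrs z) u y) / deg z).
Definition it (s : V -> R) (n : nat) : V -> R := iter n (Top s) (fun _ => 0).
Definition Ulim (s : V -> R) (x : V) : R := sup (range (fun n => it s n x)).
Definition bnd (s : V -> R) (z : V) : Prop := exists M, forall n, it s n z <= M.

Lemma sum_cst_seq (T : Type) (r : seq T) (c : R) :
  \sum_(y <- r) c = c *+ size r.
Proof. elim: r => [|a r IH]; by rewrite ?big_nil ?big_cons ?IH ?mulrS. Qed.

Lemma lapE (u : V -> R) z : lap nbrs u z = \sum_(y <- nbrs z) u y - deg z * u z.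
Proof.
rewrite /lap big_split /= sumrN sum_cst_seq /deg.
by rewrite mulr_natl.
Qed.

Hypothesis hdeg : forall z, (0 < size (nbrs z))%N.

Lemma deg_gt0 z : 0 < deg z.
Proof. by rewrite /deg ltr0n hdeg. Qed.

Lemma stabE (s f : V -> R) :
  stab_set nbrs s f <-> forall z, Top s f z <= f z.
Proof.
have key : forall z, (s z + lap nbrs f z <= 1) =
   ((s z - 1 + \sum_(y <- nbrs z) f y) / deg z <= f z).
  move=> z; rewrite ler_pdivrMr ?deg_gt0 // lapE.
  apply/idP/idP => H; lra.
split.
  by case=> H1 H2 z; rewrite /Top ge_max H1 -key H2.
move=> H; split=> z; have := H z; rewrite /Top ge_max => /andP[] //.
by rewrite -key.
Qed.

Lemma Top_ge0 s u z : 0 <= Top s u z.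
Proof. by rewrite /Top le_max lexx. Qed.

Lemma Top_mono s u v : (forall y, u y <= v y) -> forall z, Top s u z <= Top s v z.
Proof.
move=> H z; rewrite /Top ge_max le_max lexx /=.
rewrite le_max; apply/orP; right.
rewrite ler_pM2r ?invr_gt0 ?deg_gt0 // lerD2l.
by apply: ler_sum => y _.
Qed.

Lemma it_ge0 s n z : 0 <= it s n z.
Proof. by case: n => [|n] //=; apply: Top_ge0. Qed.

Lemma it_step s n z : it s n z <= it s n.+1 z.
Proof.
elim: n z => [|n IH] z /=; first exact: Top_ge0.
by apply: Top_mono => y; apply: IH.
Qed.

Lemma it_mono s n m z : (n <= m)%N -> it s n z <= it s m z.
Proof.
move=> /subnK <-; elim: (m - n)%N => [|k IH] //=.
by apply: le_trans IH _; apply: it_step.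
Qed.

Lemma it_le_stab s f : stab_set nbrs s f -> forall n z, it s n z <= f z.
Proof.
move/stabE => H; elim=> [|n IH] z /=.
  by move: f H => f H; have := H z; apply: le_trans; apply: Top_ge0.
by apply: le_trans (H z); apply: Top_mono.
Qed.


Lemma bnd_nbr s z y : uniq (nbrs z) -> y \in nbrs z -> bnd s z -> bnd s y.
Proof.
move=> uz yz [M HM]; exists (deg z * M - s z + 1) => n.
have h1 := HM n.+1; rewrite /= /Top in h1.
have h2 : (s z - 1 + \sum_(y0 <- nbrs z) it s n y0) / deg z <= M.
  by apply: le_trans h1; rewrite le_max lexx orbT.
move: h2; rewrite ler_pdivrMr ?deg_gt0 // => h2.
have h3 : it s n y <= \sum_(y0 <- nbrs z) it s n y0.
  rewrite (bigD1_seq y) //= lerDl; apply: sumr_ge0 => i _; exact: it_ge0.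
have := deg_gt0 z; lra.
Qed.

Lemma bnd_all s o : (forall z, uniq (nbrs z)) -> connected_graph nbrs ->
  bnd s o -> forall x, bnd s x.
Proof.
move=> hu hc bo x; move: bo; elim: (hc o x).
- by move=> a b hab; apply: bnd_nbr.
- by [].
- by move=> a b c _ IH1 _ IH2 /IH1 /IH2.
Qed.

Lemma it_ub s z : bnd s z -> has_ubound (range (fun n => it s n z)).
Proof. by case=> M HM; exists M => _ [n _ <-]. Qed.

Lemma it_cvg s z : bnd s z -> (fun n => it s n z) @ \oo --> Ulim s z.
Proof.
move=> b; apply: nondecreasing_cvgn; last exact: it_ub.
by move=> n m nm; apply: it_mono.
Qed.

Lemma it_le_U s z n : bnd s z -> it s n z <= Ulim s z.
Proof. by move=> b; apply: (ub_le_sup (it_ub b)); exists n. Qed.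

Lemma U_ge0 s z : bnd s z -> 0 <= Ulim s z.
Proof. by move=> b; exact: (it_le_U 0 b). Qed.

Lemma U_stab s : (forall z, bnd s z) -> stab_set nbrs s (Ulim s).
Proof.
move=> b; apply/stabE => z; rewrite /Top ge_max U_ge0 //=.
rewrite ler_pdivrMr ?deg_gt0 //.
have hc : (fun n => \sum_(y <- nbrs z) it s n y) @ \oo -->
          \sum_(y <- nbrs z) Ulim s y.
  apply: (@cvg_big _ _ +%R 0 xpredT add_continuous) => // y _.
  exact: it_cvg.
suff : \sum_(y <- nbrs z) Ulim s y <= Ulim s z * deg z - s z + 1 by lra.
apply: (cvgr_to_le hc); apply: nearW => n.
have h1 := it_le_U n.+1 (b z); rewrite /= /Top in h1.
have h2 : (s z - 1 + \sum_(y0 <- nbrs z) it s n y0) / deg z <= Ulim s z.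
  by apply: le_trans h1; rewrite le_max lexx orbT.
move: h2; rewrite ler_pdivrMr ?deg_gt0 //; lra.
Qed.

Lemma stab_bnd (s : V -> R) o : stabilizes nbrs s -> bnd s o.
Proof. by case=> f hf; exists (f o) => n; apply: it_le_stab. Qed.

Lemma odo_stab s x : (forall z, bnd s z) -> odometer nbrs s x = Ulim s x.
Proof.
move=> b; rewrite /odometer; apply/eqP; rewrite eq_le; apply/andP; split.
  apply: ge_inf; first by exists 0 => _ [f [hf _] <-].
  by exists (Ulim s) => //; exact: U_stab.
apply: lb_le_inf; first by exists (Ulim s x), (Ulim s) => //; exact: U_stab.
move=> _ [f hf <-]; apply: ge_sup; first by exists (it s 0 x), 0%N.
by move=> _ [n _ <-]; apply: it_le_stab.
Qed.

Lemma odo_nstab (s : V -> R) x : ~ stabilizes nbrs s -> odometer nbrs s x = 0.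
Proof.
move=> ns; rewrite /odometer.
suff -> : [set f x | f in stab_set nbrs s] = set0 by rewrite inf0.
by apply/seteqP; split => // y [f hf _]; apply: ns; exists f.
Qed.

End Det.


Section Aut.
Variables (V : choiceType) (nbrs : V -> seq V) (R : realType).
Hypothesis huniq : forall z, uniq (nbrs z).

Lemma aut_inv (a b : V -> V) : cancel a b -> cancel b a ->
  (forall x y, adj nbrs x y <-> adj nbrs (a x) (a y)) ->
  (forall x y, adj nbrs x y <-> adj nbrs (b x) (b y)).
Proof. by move=> ab ba h x y; rewrite (h (b x) (b y)) !ba. Qed.

Section AB.
Variables (a b : V -> V).
Hypotheses (ab : cancel a b) (ba : cancel b a)
  (hadj : forall x y, adj nbrs x y <-> adj nbrs (a x) (a y)).

Lemma perm_nbrs z : perm_eq (nbrs (b z)) (map b (nbrs z)).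
Proof.
apply: uniq_perm; first exact: huniq.
  rewrite map_inj_uniq //; exact: can_inj ba.
move=> y; apply/idP/idP.
  move=> hy; apply/mapP; exists (a y); last by rewrite ab.
  have := (hadj (b z) y).1 hy; rewrite ba; done.
case/mapP=> w hw ->; apply: (hadj (b z) (b w)).2; rewrite !ba; exact: hw.
Qed.

Lemma lap_comp (u : V -> R) z : lap nbrs (u \o b) z = lap nbrs u (b z).
Proof. by rewrite /lap (perm_big _ (perm_nbrs z)) big_map. Qed.

End AB.

Lemma odo_comp (a b : V -> V) : cancel a b -> cancel b a ->
  (forall x y, adj nbrs x y <-> adj nbrs (a x) (a y)) ->
  forall (s : V -> R) x, odometer nbrs (s \o b) x = odometer nbrs s (b x).
Proof.
move=> ab ba hadj s x; rewrite /odometer; congr inf.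
have hadj' := aut_inv ab ba hadj.
apply/seteqP; split=> _ [f hf <-].
  exists (f \o a); last by rewrite /= ba.
  case: hf => h1 h2; split=> y //=.
  rewrite (lap_comp ba ab hadj') -{1}(ab y); exact: h2.
exists (f \o b) => //; case: hf => h1 h2; split=> y //=.
rewrite (lap_comp ab ba hadj); exact: h2.
Qed.

End Aut.


Section Meas.
Variables (V : choiceType) (nbrs : V -> seq V) (R : realType).
Hypothesis huniq : forall z, uniq (nbrs z).
Hypothesis hdeg : forall z, (0 < size (nbrs z))%N.
Hypothesis hconn : connected_graph nbrs.
Variable o : V.

Lemma stabE_bnd (s : V -> R) : stabilizes nbrs s <-> bnd nbrs s o.
Proof.
split=> [h|b]; first exact: (stab_bnd hdeg o h).
exists (Ulim nbrs s); apply: (U_stab hdeg).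
exact: (bnd_all hdeg huniq hconn b).
Qed.

Lemma odoE (s : V -> R) x :
  odometer nbrs s x = if `[< bnd nbrs s o >] then Ulim nbrs s x else 0.
Proof.
case: asboolP => b.
  by apply: (odo_stab hdeg); exact: (bnd_all hdeg huniq hconn b).
by apply: odo_nstab => /stabE_bnd.
Qed.

Variables (d : measure_display) (T : measurableType d) (X : T -> V -> R).
Hypothesis hX : forall x, measurable_fun setT (fun w => X w x).

Lemma meas_le (f : T -> R) c : measurable_fun setT f ->
  measurable [set w | f w <= c].
Proof.
move=> mf; have := mf measurableT `]-oo, c]%classic (measurable_itv _).
rewrite setTI; congr measurable; apply/seteqP; split => w /=;
by rewrite in_itv /=.
Qed.

Lemma meas_it n x : measurable_fun setT (fun w => it nbrs (X w) n x).
Proof.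
elim: n x => [|n IH] x /=; first exact: measurable_cst.
rewrite /Top; apply: measurable_maxr; first exact: measurable_cst.
apply: measurable_funM; last exact: measurable_cst.
apply: measurable_funD; last exact: measurable_sum.
by apply: measurable_funB => //; exact: measurable_cst.
Qed.

Definition Bset := [set w | bnd nbrs (X w) o].

Lemma meas_B : measurable Bset.
Proof.
rewrite (_ : Bset = \bigcup_(k : nat) \bigcap_(n : nat)
     [set w | it nbrs (X w) n o <= k%:R]).
  apply: bigcupT_measurable => k; apply: bigcapT_measurable => n.
  exact/meas_le/meas_it.
apply/seteqP; split => w /=.
  case=> M HM; have [k hk] : exists k : nat, M <= k%:R.
    exists (Num.truncn `|M|).+1; apply: le_trans (ler_norm M) _.
    exact/ltW/truncnS_gt.
  by exists k => // n _; apply: le_trans (HM n) hk.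
by case=> k _ h; exists k%:R => n; exact: h.
Qed.

Lemma meas_odo x : measurable_fun setT (fun w => odometer nbrs (X w) x).
Proof.
apply: (@measurable_fun_cvg _ _ _ _ (fun n w => it nbrs (X w) n x * \1_Bset w)).
  move=> n; apply: measurable_funM; first exact: meas_it.
  exact: measurable_indic meas_B.
move=> w _; rewrite odoE indicE; case: asboolP => b.
  rewrite mem_set //; under eq_fun do rewrite mulr1.
  by apply: (it_cvg hdeg); exact: (bnd_all hdeg huniq hconn b).
rewrite memNset //; under eq_fun do rewrite mulr0; exact: cvg_cst.
Qed.

End Meas.


Definition fspace (V : choiceType) (R : realType) := V -> R.
HB.instance Definition _ V R := gen_eqMixin (fspace V R).
HB.instance Definition _ V R := gen_choiceMixin (fspace V R).
HB.instance Definition _ V (R : realType) := isPointed.Build (fspace V R) (fun _ => 0).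
Definition FS (V : choiceType) (R : realType) :=
  g_sigma_algebraType (@coord_sets V R : set (set (fspace V R))).

Section Law.
Variables (V : choiceType) (R : realType).

Lemma rf_meas d (T : measurableType d) (X : T -> V -> R) :
  (forall x, measurable_fun setT (fun w => X w x)) ->
  measurable_fun setT (X : T -> FS V R).
Proof.
move=> hX; apply: (@measurability _ _ _ (FS V R) setT (X : T -> FS V R) (@coord_sets V R : set (set (FS V R)))) => //.
move=> _ [_ [x [B [mB ->]]] <-].
have := hX x measurableT B mB; congr measurable.
Qed.

Lemma coord_meas x : measurable_fun setT (fun f : FS V R => f x).
Proof.
move=> _ B mB; rewrite setTI; apply: sub_gen_smallest.
by exists x, B.
Qed.

Lemma prod_measE (A : set (V -> R)) :
  prod_measurable A = measurable (A : set (FS V R)).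
Proof. by []. Qed.

Variables (d : measure_display) (T : measurableType d) (P : probability T R).

Lemma law_int (X Y : T -> FS V R) : measurable_fun setT X -> measurable_fun setT Y ->
  (forall A : set (FS V R), measurable A -> P (X @^-1` A) = P (Y @^-1` A)) ->
  forall h : FS V R -> R, measurable_fun setT h -> (forall f, 0 <= h f) ->
  (\int[P]_w (h (X w))%:E = \int[P]_w (h (Y w))%:E)%E.
Proof.
move=> mX mY heq h mh h0.
have mh' : measurable_fun setT (EFin \o h) by exact/measurable_EFinP.
have h0' : {in setT, forall y, (0 <= (EFin \o h) y)%E}.
  by move=> y _; rewrite lee_fin.
have e1 := @ge0_integral_pushforward _ _ _ _ R X mX P setT (EFin \o h) measurableT mh' h0'.
have e2 := @ge0_integral_pushforward _ _ _ _ R Y mY P setT (EFin \o h) measurableT mh' h0'.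
rewrite !preimage_setT in e1 e2.
rewrite -[LHS]/(\int[P]_(w in setT) ((EFin \o h) \o X) w)%E -e1.
rewrite -[RHS]/(\int[P]_(w in setT) ((EFin \o h) \o Y) w)%E -e2.
apply: eq_measure_integral => A mA _.
rewrite /pushforward /=; exact: heq.
Qed.

End Law.


Section Core.
Variables (V : choiceType) (nbrs : V -> seq V) (R : realType).
Hypothesis huniq : forall z, uniq (nbrs z).
Hypothesis hdeg : forall z, (0 < size (nbrs z))%N.
Hypothesis hconn : connected_graph nbrs.
Variables (o : V) (Gam : set (V -> V)).
Hypothesis haut : aut_subgroup nbrs Gam.
Hypothesis htrans : transitive_action Gam.
Variables (d : measure_display) (Omega : measurableType d)
  (P : probability Omega R) (s : Omega -> V -> R).
Hypothesis hrf : random_field s.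
Hypothesis hinv : invariant_law P Gam s.

Lemma exists_shift y z : exists a b, [/\ Gam a, cancel a b, cancel b a,
  (forall x1 x2, adj nbrs x1 x2 <-> adj nbrs (a x1) (a x2)) & b z = y].
Proof.
have [a [Ga ayz]] := htrans y z.
have [b [Gb [ab ba]]] := haut.2.2.2 a Ga.
exists a, b; split => //; first exact: (haut.1 a Ga).2.
by rewrite -ayz ab.
Qed.

Lemma odo_shift a b : cancel a b -> cancel b a ->
  (forall x1 x2, adj nbrs x1 x2 <-> adj nbrs (a x1) (a x2)) ->
  forall f : V -> R, odometer nbrs (Defs.shift b f) = Defs.shift b (odometer nbrs f).
Proof.
move=> ab ba hadj f; apply/funext => x; rewrite /Defs.shift /=.
exact: odo_comp.
Qed.

Lemma meas_Phi_coord x : measurable_fun setT (fun f : FS V R => odometer nbrs f x).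
Proof.
exact: (@meas_odo V nbrs R huniq hdeg hconn o _ (FS V R) (fun f => f) (@coord_meas V R)).
Qed.

Lemma meas_Phi : measurable_fun setT (fun f : FS V R => (odometer nbrs f : FS V R)).
Proof. exact: (rf_meas meas_Phi_coord). Qed.

Lemma s_meas : measurable_fun setT (s : Omega -> FS V R).
Proof. exact: rf_meas. Qed.

Lemma sb_meas b : measurable_fun setT ((fun w => Defs.shift b (s w)) : Omega -> FS V R).
Proof. by apply: rf_meas => x; exact: hrf. Qed.

Lemma odo_rf : random_field (fun w => odometer nbrs (s w)).
Proof. move=> x; exact: (meas_odo huniq hdeg hconn o hrf). Qed.

Lemma odo_inv : invariant_law P Gam (fun w => odometer nbrs (s w)).
Proof.
move=> a b Ga ab ba A mA.
have hadj := (haut.1 a Ga).2.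
have mA' : prod_measurable ((fun f : FS V R => (odometer nbrs f : FS V R)) @^-1` A).
  rewrite prod_measE; have := meas_Phi measurableT mA; by rewrite setTI.
have := hinv Ga ab ba mA'.
rewrite /preimage /=.
under [in X in _ = X -> _]eq_set do rewrite (odo_shift ab ba hadj).
done.
Qed.

Lemma odo_ge0 (f : V -> R) x : 0 <= odometer nbrs f x.
Proof.
rewrite (odoE huniq hdeg hconn o); case: asboolP => // b.
exact: (U_ge0 (bnd_all hdeg huniq hconn b x)).
Qed.

Lemma stab_odo (f : V -> R) : stabilizes nbrs f ->
  stab_set nbrs f (odometer nbrs f).
Proof.
move=> hs; have b := bnd_all hdeg huniq hconn (stab_bnd hdeg o hs).
rewrite (_ : odometer nbrs f = Ulim nbrs f); first exact: (U_stab hdeg).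
by apply/funext => x; exact: (odo_stab hdeg).
Qed.

Lemma nstab_odo (f : V -> R) : ~ stabilizes nbrs f -> odometer nbrs f = fun _ => 0.
Proof. by move=> hs; apply/funext => x; exact: odo_nstab. Qed.

Lemma meas_u y : measurable_fun setT (fun w => odometer nbrs (s w) y).
Proof. exact: odo_rf. Qed.

Lemma law_min (n : nat) y :
  (\int[P]_w (Num.min (odometer nbrs (s w) y) n%:R)%:E =
   \int[P]_w (Num.min (odometer nbrs (s w) o) n%:R)%:E)%E.
Proof.
have [a [b [Ga ab ba hadj bo]]] := exists_shift y o.
have mh : measurable_fun setT (fun f : FS V R => Num.min (odometer nbrs f o) n%:R).
  by apply: measurable_minr; [exact: meas_Phi_coord|exact: measurable_cst].
have h0 : forall f : FS V R, 0 <= Num.min (odometer nbrs f o) n%:R.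
  by move=> f; rewrite le_min odo_ge0 ler0n.
have := law_int s_meas (sb_meas b) (hinv Ga ab ba) mh h0.
move=> ->; apply: eq_integral => w _.
by rewrite (odo_shift ab ba hadj) /Defs.shift /= bo.
Qed.

Lemma int_bounded (f : Omega -> R) c : measurable_fun setT f ->
  (forall w, `|f w| <= c) -> P.-integrable setT (EFin \o f).
Proof.
move=> mf hc.
apply: (@le_integrable _ _ _ P setT measurableT _ (EFin \o cst c)).
- exact/measurable_EFinP.
- move=> w _ /=; rewrite lee_fin; apply: le_trans (hc w) _; exact: ler_norm.
- exact: finite_measure_integrable_cst.
Qed.

Lemma int_min (n : nat) y :
  P.-integrable setT (EFin \o (fun w => Num.min (odometer nbrs (s w) y) n%:R)).
Proof.
apply: (@int_bounded _ n%:R).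
  by apply: measurable_minr; [exact: meas_u|exact: measurable_cst].
move=> w; rewrite ger0_norm; first by rewrite ge_min lexx orbT.
by rewrite le_min odo_ge0 ler0n.
Qed.

Definition Dn (n : nat) w :=
  lap nbrs (fun y => Num.min (odometer nbrs (s w) y) n%:R) o.

Lemma int_Dn n : (\int[P]_w (Dn n w)%:E = 0)%E.
Proof.
rewrite /Dn /lap; under eq_integral do rewrite -sumEFin.
rewrite integral_sum //; last first.
  move=> y; under eq_fun do rewrite EFinB.
  by apply: integrableB => //; exact: int_min.
apply: big1_seq => y _.
rewrite integralB_EFin //; [|exact: int_min|exact: int_min].
rewrite law_min subee //; apply: integrable_fin_num => //; exact: int_min.
Qed.

Definition Lo w := lap nbrs (odometer nbrs (s w)) o.
Definition pp w := Num.max (1 - s w o) 0.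
Definition qq w := Num.max (s w o - 1) 0.

Lemma Dn_le n w : Dn n w <= Num.max (Lo w) 0.
Proof.
rewrite /Dn /Lo /lap /=; case: (leP (odometer nbrs (s w) o) n%:R) => hn.
  rewrite ?(min_l hn) le_max; apply/orP; left.
  by apply: ler_sum => y _; rewrite lerD2r ge_min lexx.
rewrite ?(min_r (ltW hn)) le_max; apply/orP; right.
apply: le_trans (_ : _ <= \sum_(y <- nbrs o) (0:R)) _; last by rewrite big1.
by apply: ler_sum => y _; rewrite subr_le0 ge_min lexx orbT.
Qed.

Lemma Lo_le w : Num.max (Lo w) 0 <= pp w.
Proof.
rewrite ge_max; apply/andP; split; last by rewrite /pp le_max lexx orbT.
rewrite /pp; case: (pselect (stabilizes nbrs (s w))) => hs.
  have := (stab_odo hs).2 o; rewrite /Lo => h.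
  by rewrite le_max; apply/orP; left; lra.
rewrite /Lo (nstab_odo hs) /lap big1; first by rewrite le_max lexx orbT.
by move=> y _; rewrite subrr.
Qed.

Lemma Dn_ev w : \forall n \near \oo, Dn n w = Lo w.
Proof.
set u := odometer nbrs (s w).
set t := u o + \sum_(y <- nbrs o) u y.
have ht : forall y, y \in o :: nbrs o -> u y <= t.
  have hs : 0 <= \sum_(y <- nbrs o) u y by apply: sumr_ge0 => y _; exact: odo_ge0.
  move=> y; rewrite inE => /orP[/eqP ->|hy]; first by rewrite /t lerDl.
  rewrite /t (bigD1_seq y) //=; have := odo_ge0 (s w) o.
  have : 0 <= \sum_(i <- nbrs o | i != y) u i by apply: sumr_ge0 => i _; exact: odo_ge0.
  rewrite /u; lra.
exists (Num.trunc t).+1 => // n /= hn.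
have htn : t <= n%:R.
  apply: le_trans (ltW (truncnS_gt t)) _; by rewrite ler_nat.
rewrite /Dn /Lo /lap; apply: eq_big_seq => y hy.
rewrite !min_l //; apply: le_trans htn; apply: ht => //.
  by rewrite mem_head.
by rewrite inE hy orbT.
Qed.

Lemma maxN_sub (a : R) : Num.max a 0 - Num.max (-a) 0 = a.
Proof. by case: (leP 0 a) => h; [rewrite (@max_r _ _ (-a) 0); lra | rewrite (@max_l _ _ (-a) 0); lra]. Qed.

Lemma meas_Dn n : measurable_fun setT (Dn n).
Proof.
apply: measurable_sum => y; apply: measurable_funB;
  by apply: measurable_minr; [exact: meas_u|exact: measurable_cst].
Qed.

Lemma meas_Lo : measurable_fun setT Lo.
Proof. by apply: measurable_sum => y; apply: measurable_funB; exact: meas_u. Qed.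

Lemma meas_so : measurable_fun setT (fun w => s w o).
Proof. exact: hrf. Qed.

Lemma meas_pp : measurable_fun setT pp.
Proof.
apply: measurable_maxr; last exact: measurable_cst.
by apply: measurable_funB; [exact: measurable_cst|exact: meas_so].
Qed.

Lemma meas_qq : measurable_fun setT qq.
Proof.
apply: measurable_maxr; last exact: measurable_cst.
by apply: measurable_funB; [exact: meas_so|exact: measurable_cst].
Qed.

Hypothesis hint : P.-integrable setT (fun w => (s w o)%:E).

Lemma int_g : P.-integrable setT (EFin \o (fun w => `|s w o| + 1)).
Proof.
rewrite (_ : _ \o _ = (abse \o (fun w => (s w o)%:E)) \+ (EFin \o cst 1)).
  apply: integrableD => //; first exact: integrable_abse.
  exact: finite_measure_integrable_cst.
by apply/funext => w /=; rewrite EFinD ?abse_EFin.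
Qed.

Lemma int_pp : P.-integrable setT (EFin \o pp).
Proof.
apply: (@le_integrable _ _ _ P setT measurableT _ _ _ _ int_g).
  exact/measurable_EFinP/meas_pp.
move=> w _ /=; rewrite ?abse_EFin lee_fin.
have h1 := ler_norm (- s w o); rewrite normrN in h1.
have h2 := normr_ge0 (s w o).
rewrite (ger0_norm (_ : 0 <= `|s w o| + 1)); last lra.
rewrite ger0_norm; last by rewrite /pp le_max lexx orbT.
by rewrite /pp ge_max; apply/andP; split; lra.
Qed.

Lemma int_qq : P.-integrable setT (EFin \o qq).
Proof.
apply: (@le_integrable _ _ _ P setT measurableT _ _ _ _ int_g).
  exact/measurable_EFinP/meas_qq.
move=> w _ /=; rewrite ?abse_EFin lee_fin.
have h1 := ler_norm (s w o).
have h2 := normr_ge0 (s w o).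
rewrite (ger0_norm (_ : 0 <= `|s w o| + 1)); last lra.
rewrite ger0_norm; last by rewrite /qq le_max lexx orbT.
by rewrite /qq ge_max; apply/andP; split; lra.
Qed.

Hypothesis hE : (\int[P]_w (s w o)%:E)%E = 1%E.

Lemma int_pq : (\int[P]_w (pp w)%:E = \int[P]_w (qq w)%:E)%E.
Proof.
have e1 : (\int[P]_w ((pp w)%:E - (qq w)%:E) = \int[P]_w ((1:R)%:E - (s w o)%:E))%E.
  apply: eq_integral => w _; rewrite -!EFinB /pp /qq; congr EFin.
  have := maxN_sub (1 - s w o); rewrite opprB; done.
rewrite integralB_EFin // in e1; [|exact: int_pp|exact: int_qq].
rewrite integralB_EFin // in e1; [|exact: finite_measure_integrable_cst].
rewrite hE (integral_cst P measurableT) in e1.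
rewrite [X in (1 * X - _)%E](_ : _ = 1%E) in e1; last exact: probability_setT.
rewrite mule1 subee // in e1.
have f1 := integrable_fin_num measurableT int_pp.
have f2 := integrable_fin_num measurableT int_qq.
move: e1; rewrite -(fineK f1) -(fineK f2) -EFinB => -[] h.
by congr EFin; lra.
Qed.

Lemma fatou_step :
  (\int[P]_w (pp w - Lo w)%:E <= \int[P]_w (pp w)%:E)%E.
Proof.
have mf : forall n, measurable_fun setT (fun w => (pp w - Dn n w)%:E).
  move=> n; apply/measurable_EFinP; apply: measurable_funB; [exact: meas_pp|exact: meas_Dn].
have f0 : forall n w, setT w -> (0 <= (pp w - Dn n w)%:E)%E.
  move=> n w _; rewrite lee_fin subr_ge0; apply: le_trans (Dn_le n w) (Lo_le w).
have F := fatou P measurableT mf f0.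
have e1 : forall w, limn_einf (fun n => (pp w - Dn n w)%:E) = (pp w - Lo w)%:E.
  move=> w; have c : (fun n => (pp w - Dn n w)%:E) @ \oo --> (pp w - Lo w)%:E.
    apply: cvg_near_cst; apply: filterS (Dn_ev w) => n ->; done.
  rewrite is_cvg_limn_einfE; last by apply/cvg_ex; eexists; exact: c.
  exact: cvg_lim c.
have e2 : forall n, (\int[P]_w (pp w - Dn n w)%:E = \int[P]_w (pp w)%:E)%E.
  move=> n; under eq_integral do rewrite EFinB.
  rewrite integralB_EFin //; [|exact: int_pp|].
    by rewrite int_Dn sube0.
  apply: (@int_bounded _ (2 * (size (nbrs o))%:R * n%:R)); first exact: meas_Dn.
  move=> w; rewrite /Dn /lap; apply: le_trans (ler_norm_sum _ _ _) _.
  apply: le_trans (_ : _ <= \sum_(y <- nbrs o) (2 * n%:R)) _.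
    apply: ler_sum => y _; apply: le_trans (ler_normB _ _) _.
    have hm : forall z, `|Num.min (odometer nbrs (s w) z) n%:R| <= n%:R.
      move=> z; rewrite ger0_norm ?ge_min ?lexx ?orbT //.
      by rewrite le_min odo_ge0 ler0n.
    by have := hm y; have := hm o; lra.
  by rewrite sum_cst_seq -[_ *+ size _]mulr_natr mulrAC.
under eq_integral do rewrite -e1.
apply: le_trans F _.
under eq_fun do rewrite e2.
rewrite is_cvg_limn_einfE; last exact: is_cvg_cst.
by rewrite lim_cst.
Qed.

Hypothesis hstab : {ae P, forall w, stabilizes nbrs (s w)}.

Definition z2 w := Num.max (pp w - Lo w - qq w) 0.

Lemma diff_on_stab w : stabilizes nbrs (s w) ->
  pp w - Lo w - qq w = 1 - s w o - Lo w /\ 0 <= 1 - s w o - Lo w.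
Proof.
move=> hs; have := (stab_odo hs).2 o; rewrite -/(Lo w) => h.
have := maxN_sub (1 - s w o); rewrite opprB -/(pp w) -/(qq w) => e.
split; lra.
Qed.

Lemma meas_z2 : measurable_fun setT z2.
Proof.
apply: measurable_maxr; last exact: measurable_cst.
apply: measurable_funB; last exact: meas_qq.
by apply: measurable_funB; [exact: meas_pp|exact: meas_Lo].
Qed.

Lemma int_z2 : (\int[P]_w (z2 w)%:E = 0)%E.
Proof.
have e1 : (\int[P]_w (pp w - Lo w)%:E = \int[P]_w ((qq w)%:E + (z2 w)%:E))%E.
  apply: ae_eq_integral => //.
  - by apply/measurable_EFinP; apply: measurable_funB; [exact: meas_pp|exact: meas_Lo].
  - by apply: emeasurable_funD; apply/measurable_EFinP; [exact: meas_qq|exact: meas_z2].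
  apply: filterS hstab => w hs _; rewrite -EFinD; congr EFin.
  have [e h] := diff_on_stab hs.
  by rewrite /z2 e (@max_l _ _ _ 0 h); rewrite -e; lra.
rewrite ge0_integralD // in e1; last 4 first.
- by move=> w _; rewrite lee_fin /qq le_max lexx orbT.
- exact/measurable_EFinP/meas_qq.
- by move=> w _; rewrite lee_fin /z2 le_max lexx orbT.
- exact/measurable_EFinP/meas_z2.
have := fatou_step; rewrite e1 int_pq.
have f2 := integrable_fin_num measurableT int_qq.
rewrite -[X in (_ <= X)%E]adde0 leeD2lE // => h.
apply/eqP; rewrite eq_le h /=; apply: integral_ge0 => w _.
by rewrite lee_fin /z2 le_max lexx orbT.
Qed.

Lemma ae_Lo : {ae P, forall w, Lo w = 1 - s w o}.
Proof.
have : ae_eq P setT (EFin \o z2) (cst 0%E).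
  apply/(ae_eq_integral_abs P measurableT).
    exact/measurable_EFinP/meas_z2.
  rewrite -int_z2; apply: eq_integral => w _ /=.
  by rewrite ?abse_EFin ger0_norm // /z2 le_max lexx orbT.
move=> hz; apply: filterS2 hz hstab => w hz hs.
have := hz I; rewrite /= => -[] hz0.
have [e h] := diff_on_stab hs.
move: hz0; rewrite /z2 e (@max_l _ _ _ 0 h) => hz0.
lra.
Qed.

End Core.


Section Transfer.
Variables (V : choiceType) (nbrs : V -> seq V) (R : realType).
Hypothesis huniq : forall z, uniq (nbrs z).
Hypothesis hdeg : forall z, (0 < size (nbrs z))%N.
Hypothesis hconn : connected_graph nbrs.
Variables (o : V) (Gam : set (V -> V)).
Hypothesis haut : aut_subgroup nbrs Gam.
Hypothesis htrans : transitive_action Gam.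
Variables (d : measure_display) (Omega : measurableType d)
  (P : probability Omega R) (s : Omega -> V -> R).
Hypothesis hrf : random_field s.
Hypothesis hinv : invariant_law P Gam s.

Definition Gx (x : V) : set (FS V R) :=
  [set f | lap nbrs (odometer nbrs f) x <> 1 - f x].

Lemma meas_Gx x : measurable (Gx x).
Proof.
have mg : measurable_fun setT
    (fun f : FS V R => lap nbrs (odometer nbrs f) x - (1 - f x)).
  apply: measurable_funB.
    apply: measurable_sum => y; apply: measurable_funB;
    exact: (meas_Phi_coord huniq hdeg hconn o).
  by apply: measurable_funB; [exact: measurable_cst|exact: coord_meas].
have := mg measurableT (~` [set (0:R)]) (measurableC (measurable_set1 _)).
rewrite setTI; congr measurable; apply/seteqP; split => f /=.
  by move=> h e; apply: h; rewrite e subrr.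
by move=> h e; apply: h; exact: subr0_eq e.
Qed.

Lemma transfer x : P (s @^-1` Gx o) = 0%E -> P (s @^-1` Gx x) = 0%E.
Proof.
move=> h0.
have [a [b [Ga ab ba hadj bo]]] := exists_shift haut htrans x o.
rewrite -h0 (hinv Ga ab ba (meas_Gx o)); congr (P _).
apply/seteqP; split => w /=; rewrite /Gx /=;
  rewrite (odo_shift huniq ab ba hadj) /Defs.shift /= (lap_comp huniq ab ba hadj) bo //.
Qed.

End Transfer.


Lemma deg_pos (V : choiceType) (nbrs : V -> seq V) :
  infinite_graph V -> connected_graph nbrs -> forall z, (0 < size (nbrs z))%N.
Proof.
move=> hinf hc z; rewrite lt0n size_eq0; apply/negP => /eqP hz.
have [y hyz] : exists y, y <> z.
  apply: contrapT => hne; apply: hinf.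
  rewrite (_ : [set: V] = [set z]); first exact: finite_set1.
  apply/seteqP; split => y _ //=; apply: contrapT => hyz; apply: hne; by exists y.
apply: hyz.
have gen : forall a b, clos_refl_trans V (adj nbrs) a b -> a = z -> b = z.
  move=> a b; elim=> [a' b' hab|a'|a' b' c' _ IH1 _ IH2] //.
    by move=> e; move: hab; rewrite /adj e hz.
  by move=> /IH1 /IH2.
exact: gen (hc z y) erefl.
Qed.

Section Count.
Variables (V : choiceType) (nbrs : V -> seq V) (o : V).
Fixpoint layer (n : nat) : seq V :=
  if n is k.+1 then layer k ++ flatten (map nbrs (layer k)) else [:: o].

Lemma layer_all : connected_graph nbrs -> forall x, exists n, x \in layer n.
Proof.
move=> hc x.
have gen : forall a b, clos_refl_trans V (adj nbrs) a b ->
    forall n, a \in layer n -> exists m, b \in layer m.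
  move=> a b; elim=> [a' b' hab|a'|a' b' c' _ IH1 _ IH2] n hn.
  - exists n.+1; rewrite /= mem_cat; apply/orP; right.
    by apply/flattenP; exists (nbrs a') => //; exact: map_f.
  - by exists n.
  - by have [m hm] := IH1 n hn; exact: IH2 m hm.
by apply: (gen o x (hc o x) 0%N); rewrite mem_head.
Qed.
End Count.

Lemma ae_seq (V : choiceType) (R : realType) (d : measure_display)
  (Omega : measurableType d) (P : probability Omega R)
  (Q : V -> Omega -> Prop) (l : seq V) :
  (forall x, {ae P, forall w, Q x w}) ->
  {ae P, forall w, forall x, x \in l -> Q x w}.
Proof.
move=> h; elim: l => [|a l IH].
  by apply: aeW => w x; rewrite in_nil.
apply: filterS2 (h a) IH => w h1 h2 x; rewrite inE => /orP[/eqP->//|].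
exact: h2.
Qed.

Theorem lemma4p3 (V : choiceType) (nbrs : V -> seq V)
  (Gam : set (V -> V)) (o : V)
  (R : realType) (d : measure_display) (Omega : measurableType d)
  (P : probability Omega R) (s : Omega -> V -> R) :
  simple_graph nbrs -> infinite_graph V -> connected_graph nbrs ->
  vertex_transitive nbrs ->
  aut_subgroup nbrs Gam -> transitive_action Gam ->
  random_field s ->
  invariant_law P Gam s -> ergodic_law P Gam s ->
  P.-integrable setT (fun w => (s w o)%:E) ->
  {ae P, forall w, stabilizes nbrs (s w)} ->
  (random_field (fun w => odometer nbrs (s w)) /\
   invariant_law P Gam (fun w => odometer nbrs (s w))) /\
  ((\int[P]_w (s w o)%:E)%E = 1%E ->
   {ae P, forall w, (forall x, stabilization nbrs (s w) x = 1) /\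
                    (forall x, lap nbrs (odometer nbrs (s w)) x = 1 - s w x)}).
Proof.
move=> hsimple hinf hconn _ haut htrans hrf hinv _ hint hstab.
have huniq : forall z, uniq (nbrs z) := hsimple.1.
have hdeg := deg_pos hinf hconn.
split.
  split; first exact: (odo_rf huniq hdeg hconn o hrf).
  exact: (odo_inv huniq hdeg hconn o haut hinv).
move=> hE.
have c1 := ae_Lo huniq hdeg hconn haut htrans hrf hinv hint hE hstab.
have ms : forall x, measurable (s @^-1` Gx nbrs x).
  move=> x; have := s_meas hrf measurableT (meas_Gx huniq hdeg hconn o x).
  by rewrite setTI.
have h0 : P (s @^-1` Gx nbrs o) = 0%E.
  case: c1 => N [mN PN sub]; apply: (subset_measure0 (ms o) mN _ PN).
  by move=> w hw; apply: sub => /= e; apply: hw; exact: e.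
have c2 : forall x, {ae P, forall w, lap nbrs (odometer nbrs (s w)) x = 1 - s w x}.
  move=> x; exists (s @^-1` Gx nbrs x); split.
  - exact: ms.
  - exact: (transfer huniq hdeg hconn haut htrans hinv x h0).
  - by move=> w /= hw e; apply: hw.
have c3 : {ae P, forall w, forall n x, x \in layer nbrs o n ->
    lap nbrs (odometer nbrs (s w)) x = 1 - s w x}.
  by apply: ae_foralln => n; apply: ae_seq.
apply: filterS c3 => w h.
have hx : forall x, lap nbrs (odometer nbrs (s w)) x = 1 - s w x.
  by move=> x; have [n hn] := layer_all o hconn x; exact: h n x hn.
split => // x; rewrite /stabilization hx; lra.
Qed.
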